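(* Let $\Gamma=(\Gamma_i)_{i\in\mathit{Agt}}$ be an agent vocabulary profile with each $\Gamma_i$ finite, let $\varphi_0\in\mathcal{L}^{\mathsf{dyn}}$ and let $S_0=((B_i)_i,V)$ be a state in $\mathbf{S}_\Gamma$. Then $(S_0,\mathbf{S}_\Gamma)\models\varphi_0$ iff the quantified Boolean formula $\exists X_s(\mathrm{desc}_{S_0}(X_s)\wedge tr_s(\varphi_0))$ is true.
   Context: Setting. $\mathit{Agt}=\{1,\dots,n\}$; $\mathit{Atm}$ countably infinite, containing special atoms $\mathsf{rew}_i,\mathsf{pun}_i$. $\mathcal{L}_0$: $\alpha::=p\mid\neg\alpha\mid\alpha\wedge\alpha\mid\triangle_i\alpha$. State $S=((B_i)_i,V)$, $B_i\subseteq\mathcal{L}_0$, $V\subseteq\mathit{Atm}$; $S\models p$ iff $p\in V$, Boolean as usual, $S\models\triangle_i\alpha$ iff $\alpha\in B_i$. $S\mathcal{E}_iS'$ iff $S'\models\alpha$ for all $\alpha\in B_i$; $S\mathcal{A}_iS'$ iff $S'\models\alpha$ for some $\alpha$ with $(\alpha\to\mathsf{rew}_i)\in B_i$; $S\mathcal{R}_iS'$ iff $S'\models\alpha$ for some $\alpha$ with $(\alpha\to\mathsf{pun}_i)\in B_i$. $\mathbf{S}_\Gamma$ is the set of states with $B_i\subseteq\Gamma_i$ for all $i$. Programs $\pi::=+_i\alpha\mid-_i\alpha\mid\pi;\pi\mid\pi\cup\pi\mid?\varphi$; $\mathcal{L}^{\mathsf{dyn}}$: $\varphi::=\alpha\mid\neg\varphi\mid\varphi\wedge\varphi\mid\Box_i\varphi\mid\mathcal{A}_i\varphi\mid\mathcal{R}_i\varphi\mid\mathcal{A}^{\mathsf{real}}_i\varphi\mid\mathcal{R}^{\mathsf{real}}_i\varphi\mid[\pi]\varphi$.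 For $S\in U$: $(S,U)\models\alpha$ iff $S\models\alpha$; $(S,U)\models\Box_i\varphi$ iff all $S'\in U$ with $S\mathcal{E}_iS'$ satisfy $\varphi$; $(S,U)\models\mathcal{A}_i\varphi$ (resp. $\mathcal{R}_i\varphi$) iff every $S'\in U$ satisfying $\varphi$ has $S\mathcal{A}_iS'$ (resp. $S\mathcal{R}_iS'$); $(S,U)\models\mathcal{A}^{\mathsf{real}}_i\varphi$ (resp. $\mathcal{R}^{\mathsf{real}}_i\varphi$) iff every $S'\in U$ satisfying $\varphi$ with $S\mathcal{E}_iS'$ has $S\mathcal{A}_iS'$ (resp. $S\mathcal{R}_iS'$); $(S,U)\models[\pi]\varphi$ iff every $S'\in U$ with $S\to^U_\pi S'$ satisfies $\varphi$, where $S\to^U_{+_i\alpha}S'$ iff $V'=V$, $B'_i=B_i\cup\{\alpha\}$, $B'_j=B_j$ ($j\ne i$); $S\to^U_{-_i\alpha}S'$ likewise with $B'_i=B_i\setminus\{\alpha\}$; $;$ is composition through some $S''\in U$; $\cup$ is union; $S\to^U_{?\varphi}S'$ iff $S'=S$ and $(S,U)\models\varphi$. Translation. For abstract symbols $s$ and $\beta\in\mathcal{L}_0$ there are QBF variables $x_{\beta,s}$. $X_s$ is the set of variables $x_{\triangle_i\alpha,s}$, $x_{\triangle_i(\alpha\to\mathsf{rew}_i),s}$, $x_{\triangle_i(\alpha\to\mathsf{pun}_i),s}$ for $i\in\mathit{Agt}$, $\alpha\in\Gamma_i$, and $x_{p,s}$ for atoms $p$ occurring in $\Gamma$ or $\varphi_0$;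 $\forall X_s$/$\exists X_s$ quantify all of them. Macros: $\mathrm{eq}_{\mathrm{prop}}(s,s'):=\bigwedge_p(x_{p,s}\leftrightarrow x_{p,s'})$; $\mathrm{eq}_j(s,s'):=\bigwedge_{\alpha\in\Gamma_j}(x_{\triangle_j\alpha,s}\leftrightarrow x_{\triangle_j\alpha,s'})$; $\mathrm{eq}^{+\alpha}_i(s,s'):=x_{\triangle_i\alpha,s'}\wedge\bigwedge_{\beta\in\Gamma_i,\beta\ne\alpha}(x_{\triangle_i\beta,s}\leftrightarrow x_{\triangle_i\beta,s'})$; $\mathrm{eq}^{-\alpha}_i(s,s'):=\neg x_{\triangle_i\alpha,s'}\wedge\bigwedge_{\beta\in\Gamma_i,\beta\ne\alpha}(x_{\triangle_i\beta,s}\leftrightarrow x_{\triangle_i\beta,s'})$. $tr_s$: $tr_s(p)=x_{p,s}$; $tr_s(\neg\varphi)=\neg tr_s(\varphi)$; $tr_s(\varphi\wedge\psi)=tr_s(\varphi)\wedge tr_s(\psi)$; $tr_s(\triangle_i\alpha)=x_{\triangle_i\alpha,s}$ if $\alpha\in\Gamma_i$, else $\bot$; $tr_s(\Box_i\varphi)=\forall X_{s''}(E_{i,s,s''}\to tr_{s''}(\varphi))$; $tr_s(\mathcal{A}_i\varphi)=\forall X_{s''}(tr_{s''}(\varphi)\to A_{i,s,s''})$; $tr_s(\mathcal{R}_i\varphi)=\forall X_{s''}(tr_{s''}(\varphi)\to R_{i,s,s''})$; $tr_s(\mathcal{A}^{\mathsf{real}}_i\varphi)=\forall X_{s''}(tr_{s''}(\varphi)\wedge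 E_{i,s,s''}\to A_{i,s,s''})$; $tr_s(\mathcal{R}^{\mathsf{real}}_i\varphi)=\forall X_{s''}(tr_{s''}(\varphi)\wedge E_{i,s,s''}\to R_{i,s,s''})$; $tr_s([\pi]\varphi)=\forall X_{s''}(tr^{\mathrm{prog}}_{s,s''}(\pi)\to tr_{s''}(\varphi))$; where $E_{i,s,s''}:=\bigwedge_{\alpha\in\Gamma_i}(x_{\triangle_i\alpha,s}\to tr_{s''}(\alpha))$, $A_{i,s,s''}:=\bigvee_{(\alpha\to\mathsf{rew}_i)\in\Gamma_i}(x_{\triangle_i(\alpha\to\mathsf{rew}_i),s}\wedge tr_{s''}(\alpha))$, $R_{i,s,s''}:=\bigvee_{(\alpha\to\mathsf{pun}_i)\in\Gamma_i}(x_{\triangle_i(\alpha\to\mathsf{pun}_i),s}\wedge tr_{s''}(\alpha))$. $tr^{\mathrm{prog}}$: $tr^{\mathrm{prog}}_{s,s'}(+_i\alpha)=\bigwedge_{j\ne i}\mathrm{eq}_j(s,s')\wedge\mathrm{eq}^{+\alpha}_i(s,s')\wedge\mathrm{eq}_{\mathrm{prop}}(s,s')$; $tr^{\mathrm{prog}}_{s,s'}(-_i\alpha)=\bigwedge_{j\ne i}\mathrm{eq}_j(s,s')\wedge\mathrm{eq}^{-\alpha}_i(s,s')\wedge\mathrm{eq}_{\mathrm{prop}}(s,s')$; $tr^{\mathrm{prog}}_{s,s'}(\pi_1;\pi_2)=\exists X_{s''}(tr^{\mathrm{prog}}_{s,s''}(\pi_1)\wedge tr^{\mathrm{prog}}_{s'',s'}(\pi_2))$;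 $tr^{\mathrm{prog}}_{s,s'}(\pi_1\cup\pi_2)=tr^{\mathrm{prog}}_{s,s'}(\pi_1)\vee tr^{\mathrm{prog}}_{s,s'}(\pi_2)$; $tr^{\mathrm{prog}}_{s,s'}(?\varphi)=\bigwedge_j\mathrm{eq}_j(s,s')\wedge\mathrm{eq}_{\mathrm{prop}}(s,s')\wedge tr_s(\varphi)$. In each quantified clause $s''$ is a fresh symbol. Finally $\mathrm{desc}_{S_0}(X_s):=\bigwedge_i(\bigwedge_{\alpha\in B_i}x_{\triangle_i\alpha,s}\wedge\bigwedge_{\alpha\in\Gamma_i\setminus B_i}\neg x_{\triangle_i\alpha,s})\wedge\bigwedge_{p\in V}x_{p,s}\wedge\bigwedge_{p\notin V}\neg x_{p,s}$ (over atoms $p$ with $x_{p,s}\in X_s$). *)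

(* Defs.v *)
From mathcomp Require Import all_boot.
From Stdlib Require List.

Set Implicit Arguments.
Unset Strict Implicit.
Unset Printing Implicit Defensive.

Inductive atom (n : nat) : Type :=
| AVar : nat -> atom n
| ARew : 'I_n -> atom n
| APun : 'I_n -> atom n.

Inductive L0 (n : nat) : Type :=
| Atom : atom n -> L0 n
| Neg : L0 n -> L0 n
| And : L0 n -> L0 n -> L0 n
| Tri : 'I_n -> L0 n -> L0 n.

Arguments AVar {n} _.
Arguments ARew {n} _.
Arguments APun {n} _.
Arguments Atom {n} _.
Arguments Neg {n} _.
Arguments And {n} _ _.
Arguments Tri {n} _ _.

Definition Impl n (a b : L0 n) : L0 n := Neg (And a (Neg b)).

Definition atom_eq_dec n (a b : atom n) : {a = b} + {a <> b}.
Proof. decide equality; apply: eq_comparable. Defined.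

Definition L0_eq_dec n (a b : L0 n) : {a = b} + {a <> b}.
Proof. decide equality; first exact: atom_eq_dec. apply: eq_comparable. Defined.

Definition L0_eqb n (a b : L0 n) : bool := if L0_eq_dec a b then true else false.

Inductive form (n : nat) : Type :=
| FBase : L0 n -> form n
| FNeg : form n -> form n
| FAnd : form n -> form n -> form n
| FBox : 'I_n -> form n -> form n
| FA : 'I_n -> form n -> form n
| FR : 'I_n -> form n -> form n
| FAreal : 'I_n -> form n -> form n
| FRreal : 'I_n -> form n -> form n
| FProg : prog n -> form n -> form n
with prog (n : nat) : Type :=
| PAdd : 'I_n -> L0 n -> prog n
| PRem : 'I_n -> L0 n -> prog n
| PSeq : prog n -> prog n -> prog n
| PUnion : prog n -> prog n -> prog n
| PTest : form n -> prog n.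

Arguments FBase {n} _.
Arguments FNeg {n} _.
Arguments FAnd {n} _ _.
Arguments FBox {n} _ _.
Arguments FA {n} _ _.
Arguments FR {n} _ _.
Arguments FAreal {n} _ _.
Arguments FRreal {n} _ _.
Arguments FProg {n} _ _.
Arguments PAdd {n} _ _.
Arguments PRem {n} _ _.
Arguments PSeq {n} _ _.
Arguments PUnion {n} _ _.
Arguments PTest {n} _.

(* A state S = ((B_i)_i, V); subsets are represented by their          *)
(* (boolean) characteristic functions.                                  *)
Record state (n : nat) : Type := State {
  st_B : 'I_n -> L0 n -> bool;
  st_V : atom n -> bool }.

Section Semantics.
Variable n : nat.

Fixpoint sat0 (S : state n) (a : L0 n) : Prop :=
  match a with
  | Atom p => st_V S p
  | Neg b => ~ sat0 S b
  | And b c => sat0 S b /\ sat0 S c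
  | Tri i b => st_B S i b
  end.

Definition relE (i : 'I_n) (S S' : state n) : Prop :=
  forall a, st_B S i a -> sat0 S' a.
Definition relA (i : 'I_n) (S S' : state n) : Prop :=
  exists a, st_B S i (Impl a (Atom (ARew i))) /\ sat0 S' a.
Definition relR (i : 'I_n) (S S' : state n) : Prop :=
  exists a, st_B S i (Impl a (Atom (APun i))) /\ sat0 S' a.

Definition in_SG (Gamma : 'I_n -> list (L0 n)) (S : state n) : Prop :=
  forall i a, st_B S i a -> List.In a (Gamma i).

Definition state_eq (S S' : state n) : Prop :=
  (forall p, st_V S' p = st_V S p) /\ (forall j a, st_B S' j a = st_B S j a).

Fixpoint sat (U : state n -> Prop) (S : state n) (f : form n) {struct f} : Prop :=
  match f with
  | FBase a => sat0 S a
  | FNeg g => ~ sat U S g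
  | FAnd g h => sat U S g /\ sat U S h
  | FBox i g => forall S', U S' -> relE i S S' -> sat U S' g
  | FA i g => forall S', U S' -> sat U S' g -> relA i S S'
  | FR i g => forall S', U S' -> sat U S' g -> relR i S S'
  | FAreal i g => forall S', U S' -> sat U S' g -> relE i S S' -> relA i S S'
  | FRreal i g => forall S', U S' -> sat U S' g -> relE i S S' -> relR i S S'
  | FProg p g => forall S', U S' -> trans U p S S' -> sat U S' g
  end
with trans (U : state n -> Prop) (p : prog n) (S S' : state n) {struct p} : Prop :=
  match p with
  | PAdd i a =>
      (forall q, st_V S' q = st_V S q) /\
      (forall b, st_B S' i b = st_B S i b || L0_eqb b a) /\
      (forall j b, j <> i -> st_B S' j b = st_B S j b)
  | PRem i a =>
      (forall q, st_V S' q = st_V S q) /\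
      (forall b, st_B S' i b = st_B S i b && ~~ L0_eqb b a) /\
      (forall j b, j <> i -> st_B S' j b = st_B S j b)
  | PSeq p1 p2 => exists S'', U S'' /\ trans U p1 S S'' /\ trans U p2 S'' S'
  | PUnion p1 p2 => trans U p1 S S' \/ trans U p2 S S'
  | PTest g => state_eq S S' /\ sat U S g
  end.

End Semantics.

(* QBF variable x_{beta,s}: beta in L0, s an abstract symbol (a nat). *)
Definition qvar (n : nat) : Type := (L0 n * nat)%type.

Definition qvar_eq_dec n (v w : qvar n) : {v = w} + {v <> w}.
Proof. decide equality; [apply: eq_comparable | exact: L0_eq_dec]. Defined.

Inductive qbf (n : nat) : Type :=
| QVar : qvar n -> qbf n
| QTrue : qbf n
| QFalse : qbf n
| QNeg : qbf n -> qbf n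
| QAnd : qbf n -> qbf n -> qbf n
| QOr : qbf n -> qbf n -> qbf n
| QImpl : qbf n -> qbf n -> qbf n
| QIff : qbf n -> qbf n -> qbf n
| QForall : qvar n -> qbf n -> qbf n
| QExists : qvar n -> qbf n -> qbf n.

Arguments QVar {n} _.
Arguments QTrue {n}.
Arguments QFalse {n}.
Arguments QNeg {n} _.
Arguments QAnd {n} _ _.
Arguments QOr {n} _ _.
Arguments QImpl {n} _ _.
Arguments QIff {n} _ _.
Arguments QForall {n} _ _.
Arguments QExists {n} _ _.

Definition upd n (nu : qvar n -> bool) (v : qvar n) (b : bool) : qvar n -> bool :=
  fun w => if qvar_eq_dec w v then b else nu w.

Fixpoint qeval n (nu : qvar n -> bool) (f : qbf n) : bool :=
  match f with
  | QVar v => nu v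
  | QTrue => true
  | QFalse => false
  | QNeg g => ~~ qeval nu g
  | QAnd g h => qeval nu g && qeval nu h
  | QOr g h => qeval nu g || qeval nu h
  | QImpl g h => qeval nu g ==> qeval nu h
  | QIff g h => qeval nu g == qeval nu h
  | QForall v g => qeval (upd nu v true) g && qeval (upd nu v false) g
  | QExists v g => qeval (upd nu v true) g || qeval (upd nu v false) g
  end.

(* A QBF is true: evaluated with every free variable set to false
   (for closed formulas the valuation is irrelevant). *)
Definition qbf_true n (f : qbf n) : Prop := qeval (fun _ => false) f.

Definition qAndL n (l : seq (qbf n)) : qbf n := foldr QAnd QTrue l.
Definition qOrL n (l : seq (qbf n)) : qbf n := foldr QOr QFalse l.
Definition QForallL n (vs : seq (qvar n)) (f : qbf n) : qbf n := foldr QForall f vs.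
Definition QExistsL n (vs : seq (qvar n)) (f : qbf n) : qbf n := foldr QExists f vs.

Fixpoint atoms0 n (a : L0 n) : seq (atom n) :=
  match a with
  | Atom p => [:: p]
  | Neg b => atoms0 b
  | And b c => atoms0 b ++ atoms0 c
  | Tri _ b => atoms0 b
  end.

Fixpoint atoms_form n (f : form n) : seq (atom n) :=
  match f with
  | FBase a => atoms0 a
  | FNeg g => atoms_form g
  | FAnd g h => atoms_form g ++ atoms_form h
  | FBox _ g | FA _ g | FR _ g | FAreal _ g | FRreal _ g => atoms_form g
  | FProg p g => atoms_prog p ++ atoms_form g
  end
with atoms_prog n (p : prog n) : seq (atom n) :=
  match p with
  | PAdd _ a | PRem _ a => atoms0 a
  | PSeq p1 p2 | PUnion p1 p2 => atoms_prog p1 ++ atoms_prog p2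
  | PTest g => atoms_form g
  end.

Definition atoms_of n (Gamma : 'I_n -> list (L0 n)) (phi0 : form n) : seq (atom n) :=
  flatten [seq flatten [seq atoms0 a | a <- Gamma i] | i <- enum 'I_n] ++ atoms_form phi0.

Section Translation.
Variable n : nat.
Variable Gamma : 'I_n -> list (L0 n).
Variable atms : seq (atom n).   (* atoms occurring in Gamma or phi0 *)

Definition qv (b : L0 n) (s : nat) : qbf n := QVar (b, s).

Definition inGamma (i : 'I_n) (a : L0 n) : bool :=
  if List.in_dec (@L0_eq_dec n) a (Gamma i) then true else false.

Definition ante_of (q : atom n) (a : L0 n) : option (L0 n) :=
  match a with
  | Neg (And al (Neg (Atom q'))) => if atom_eq_dec q' q then Some al else None
  | _ => None
  end.

Definition Xs (s : nat) : seq (qvar n) :=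
  flatten [seq [seq (Tri i a, s) | a <- Gamma i]
               ++ [seq (Tri i (Impl a (Atom (ARew i))), s) | a <- pmap (ante_of (ARew i)) (Gamma i)]
               ++ [seq (Tri i (Impl a (Atom (APun i))), s) | a <- pmap (ante_of (APun i)) (Gamma i)]
          | i <- enum 'I_n]
  ++ [seq (Atom p, s) | p <- atms].

Fixpoint tr0 (s : nat) (a : L0 n) : qbf n :=
  match a with
  | Atom p => qv (Atom p) s
  | Neg b => QNeg (tr0 s b)
  | And b c => QAnd (tr0 s b) (tr0 s c)
  | Tri i b => if inGamma i b then qv (Tri i b) s else QFalse
  end.

Definition Ef (i : 'I_n) (s s'' : nat) : qbf n :=
  qAndL [seq QImpl (qv (Tri i a) s) (tr0 s'' a) | a <- Gamma i].
Definition Af (i : 'I_n) (s s'' : nat) : qbf n :=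
  qOrL [seq QAnd (qv (Tri i (Impl al (Atom (ARew i)))) s) (tr0 s'' al)
       | al <- pmap (ante_of (ARew i)) (Gamma i)].
Definition Rf (i : 'I_n) (s s'' : nat) : qbf n :=
  qOrL [seq QAnd (qv (Tri i (Impl al (Atom (APun i)))) s) (tr0 s'' al)
       | al <- pmap (ante_of (APun i)) (Gamma i)].

Definition eq_prop (s s' : nat) : qbf n :=
  qAndL [seq QIff (qv (Atom p) s) (qv (Atom p) s') | p <- atms].
Definition eq_ag (j : 'I_n) (s s' : nat) : qbf n :=
  qAndL [seq QIff (qv (Tri j a) s) (qv (Tri j a) s') | a <- Gamma j].
Definition eq_others (i : 'I_n) (a : L0 n) (s s' : nat) : qbf n :=
  qAndL [seq QIff (qv (Tri i b) s) (qv (Tri i b) s') | b <- Gamma i & ~~ L0_eqb b a].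
Definition eq_plus (i : 'I_n) (a : L0 n) (s s' : nat) : qbf n :=
  QAnd (qv (Tri i a) s') (eq_others i a s s').
Definition eq_minus (i : 'I_n) (a : L0 n) (s s' : nat) : qbf n :=
  QAnd (QNeg (qv (Tri i a) s')) (eq_others i a s s').
Definition eq_all_but (i : 'I_n) (s s' : nat) : qbf n :=
  qAndL [seq eq_ag j s s' | j <- enum 'I_n & j != i].
Definition eq_all (s s' : nat) : qbf n :=
  qAndL [seq eq_ag j s s' | j <- enum 'I_n].

(* d is the fresh-symbol supply: all symbols in scope are < d, and the
   symbol d is the fresh s'' introduced by the current clause. *)
Fixpoint tr (d s : nat) (f : form n) {struct f} : qbf n :=
  match f with
  | FBase a => tr0 s a
  | FNeg g => QNeg (tr d s g)
  | FAnd g h => QAnd (tr d s g) (tr d s h)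
  | FBox i g => QForallL (Xs d) (QImpl (Ef i s d) (tr d.+1 d g))
  | FA i g => QForallL (Xs d) (QImpl (tr d.+1 d g) (Af i s d))
  | FR i g => QForallL (Xs d) (QImpl (tr d.+1 d g) (Rf i s d))
  | FAreal i g => QForallL (Xs d) (QImpl (QAnd (tr d.+1 d g) (Ef i s d)) (Af i s d))
  | FRreal i g => QForallL (Xs d) (QImpl (QAnd (tr d.+1 d g) (Ef i s d)) (Rf i s d))
  | FProg p g => QForallL (Xs d) (QImpl (trprog d.+1 s d p) (tr d.+1 d g))
  end
with trprog (d s s' : nat) (p : prog n) {struct p} : qbf n :=
  match p with
  | PAdd i a => QAnd (eq_all_but i s s') (QAnd (eq_plus i a s s') (eq_prop s s'))
  | PRem i a => QAnd (eq_all_but i s s') (QAnd (eq_minus i a s s') (eq_prop s s'))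
  | PSeq p1 p2 => QExistsL (Xs d) (QAnd (trprog d.+1 s d p1) (trprog d.+1 d s' p2))
  | PUnion p1 p2 => QOr (trprog d s s' p1) (trprog d s s' p2)
  | PTest g => QAnd (eq_all s s') (QAnd (eq_prop s s') (tr d s g))
  end.

Definition desc (S0 : state n) (s : nat) : qbf n :=
  QAnd (qAndL [seq QAnd (qAndL [seq qv (Tri i a) s | a <- Gamma i & st_B S0 i a])
                        (qAndL [seq QNeg (qv (Tri i a) s) | a <- Gamma i & ~~ st_B S0 i a])
              | i <- enum 'I_n])
       (QAnd (qAndL [seq qv (Atom p) s | p <- atms & st_V S0 p])
             (qAndL [seq QNeg (qv (Atom p) s) | p <- atms & ~~ st_V S0 p])).

End Translation.

Definition translation n (Gamma : 'I_n -> list (L0 n)) (phi0 : form n)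
    (S0 : state n) : qbf n :=
  let atms := atoms_of Gamma phi0 in
  QExistsL (Xs Gamma atms 0) (QAnd (desc Gamma atms S0 0) (tr Gamma atms 1 0 phi0)).

(* Main.v *)
Require Import Defs.
From HB Require Import structures.
From mathcomp Require Import all_boot.
Set Implicit Arguments.
Unset Strict Implicit.
Unset Printing Implicit Defensive.

HB.instance Definition _ (n : nat) := comparableMixin (@atom_eq_dec n).
HB.instance Definition _ (n : nat) := comparableMixin (@L0_eq_dec n).

Lemma L0_eqbE n (a b : L0 n) : L0_eqb a b = (a == b).
Proof. by rewrite /L0_eqb; case: L0_eq_dec => [e|ne] /=; apply/esym/eqP. Qed.

Lemma InE (T : eqType) (x : T) s : List.In x s <-> x \in s.
Proof. elim: s => //= y s IH; rewrite in_cons; split => [[->|/IH->]|/orP[/eqP->|/IH]]; auto; by rewrite ?eqxx ?orbT. Qed.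

Lemma qeval_ext n (f : qbf n) nu nu' : nu =1 nu' -> qeval nu f = qeval nu' f.
Proof.
elim: f nu nu' => /= [v|||g IH|g IH h IH'|g IH h IH'|g IH h IH'|g IH h IH'|v g IH|v g IH] nu nu' E //;
  rewrite ?(IH nu nu') ?(IH' nu nu') //.
all: have Eu : forall b, upd nu v b =1 upd nu' v b by move=> b w; rewrite /upd; destruct (qvar_eq_dec w v) => //; exact: E.
all: by rewrite (IH _ _ (Eu true)) (IH _ _ (Eu false)).
Qed.

Definition outside n (vs : seq (qvar n)) (nu nu' : qvar n -> bool) :=
  forall w, w \notin vs -> nu' w = nu w.

Lemma upd_neq n (nu : qvar n -> bool) v b w : w != v -> upd nu v b w = nu w.
Proof. move=> /eqP ne; rewrite /upd; by destruct (qvar_eq_dec w v). Qed.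
Lemma upd_eq n (nu : qvar n -> bool) v b : upd nu v b v = b.
Proof. rewrite /upd; by destruct (qvar_eq_dec v v). Qed.

Lemma qeval_forallL n vs (f : qbf n) nu :
  qeval nu (QForallL vs f) <-> (forall nu', outside vs nu nu' -> qeval nu' f).
Proof.
elim: vs nu => [|v vs IH] nu /=.
  split=> [H nu' Ho|H]; last by apply: H.
  by rewrite (qeval_ext f (nu' := nu)) // => w; rewrite Ho.
split.
  move=> /andP[Ht Hf] nu' Ho.
  have Hb : forall b, nu' v = b -> qeval nu' f.
    move=> b Eb; have := IH (upd nu v b); case=> H _; apply: H.
      by case: b Eb => Eb; [exact: Ht | exact: Hf].
    move=> w wn; case: (eqVneq w v) => [->|ne]; first by rewrite upd_eq.
    by rewrite upd_neq // Ho // in_cons negb_or wn ne.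
  exact: (Hb (nu' v)).
move=> H; apply/andP; split; apply/IH => nu' Ho; apply: H => w;
  rewrite in_cons negb_or => /andP[wv wvs]; by rewrite Ho // upd_neq.
Qed.

Lemma qeval_existsL n vs (f : qbf n) nu :
  qeval nu (QExistsL vs f) <-> (exists nu', outside vs nu nu' /\ qeval nu' f).
Proof.
elim: vs nu => [|v vs IH] nu /=.
  split=> [H|[nu' [Ho H]]]; first by exists nu.
  by rewrite (qeval_ext f (nu' := nu')) // => w; rewrite Ho.
split.
  move=> /orP[] /IH [nu' [Ho H]]; exists nu'; split => // w;
  rewrite in_cons negb_or => /andP[wv wvs]; by rewrite Ho // upd_neq.
move=> [nu' [Ho H]].
have Hb : forall b, nu' v = b -> qeval (upd nu v b) (QExistsL vs f).
  move=> b Eb; apply/IH; exists nu'; split => // w wn.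
  case: (eqVneq w v) => [->|ne]; first by rewrite upd_eq.
  by rewrite upd_neq // Ho // in_cons negb_or wn ne.
by case E: (nu' v); have := Hb _ E => ->; rewrite ?orbT.
Qed.

Lemma qAndL_E n nu (l : seq (qbf n)) : qeval nu (qAndL l) = all (qeval nu) l.
Proof. by elim: l => //= g l ->. Qed.
Lemma qOrL_E n nu (l : seq (qbf n)) : qeval nu (qOrL l) = has (qeval nu) l.
Proof. by elim: l => //= g l ->. Qed.

Lemma ante_ofP n (q : atom n) b al : ante_of q b = Some al -> b = Impl al (Atom q).
Proof.
destruct b as [|b| |]; try (intro H; discriminate H).
destruct b as [| |b c|]; try (intro H; discriminate H).
destruct c as [|c| |]; try (intro H; discriminate H).
destruct c as [q'| | |]; try (intro H; discriminate H).
simpl. destruct (atom_eq_dec q' q) as [->|]; [intros [= <-]; reflexivity | intro H; discriminate H].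
Qed.

Lemma ante_of_Impl n (q : atom n) al : ante_of q (Impl al (Atom q)) = Some al.
Proof. by rewrite /Impl /=; case: atom_eq_dec. Qed.

Lemma mem_pmap_ante n (q : atom n) a s : (a \in pmap (ante_of q) s) = (Impl a (Atom q) \in s).
Proof.
rewrite mem_pmap; apply/mapP/idP => [[b bs /esym/ante_ofP E]|H]; first by rewrite -E.
by exists (Impl a (Atom q)) => //; rewrite ante_of_Impl.
Qed.

Lemma Xs_snd n (Gamma : 'I_n -> list (L0 n)) atms d w : w \in Xs Gamma atms d -> w.2 = d.
Proof.
rewrite mem_cat => /orP[/flattenP[l /mapP[i _ ->]] | /mapP[p _ ->]] //.
by rewrite !mem_cat => /or3P[/mapP[a _ ->]|/mapP[a _ ->]|/mapP[a _ ->]].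
Qed.

Lemma Xs_tri n (Gamma : 'I_n -> list (L0 n)) atms d i a k :
  (Tri i a, k) \in Xs Gamma atms d -> a \in Gamma i.
Proof.
rewrite mem_cat => /orP[/flattenP[l /mapP[j _ ->]] | /mapP[p _ //]].
rewrite !mem_cat => /or3P[/mapP[b bG [-> -> _]]|/mapP[b bG [-> -> _]]|/mapP[b bG [-> -> _]]] //.
all: by rewrite mem_pmap_ante in bG.
Qed.

Lemma Xs_in_tri n (Gamma : 'I_n -> list (L0 n)) atms d i a :
  a \in Gamma i -> (Tri i a, d) \in Xs Gamma atms d.
Proof.
move=> aG; rewrite mem_cat; apply/orP; left; apply/flattenP.
eexists; first by apply/mapP; exists i; rewrite ?mem_enum.
by rewrite mem_cat; apply/orP; left; apply/mapP; exists a.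
Qed.

Lemma Xs_in_atom n (Gamma : 'I_n -> list (L0 n)) atms d p :
  p \in atms -> (Atom p, d) \in Xs Gamma atms d.
Proof. by move=> pa; rewrite mem_cat; apply/orP; right; apply/mapP; exists p. Qed.

Definition SG n (Gamma : 'I_n -> list (L0 n)) (S : state n) :=
  forall i a, st_B S i a -> a \in Gamma i.

Lemma SG_in n (Gamma : 'I_n -> list (L0 n)) S : in_SG Gamma S <-> SG Gamma S.
Proof. by split=> H i a /H /InE. Qed.

Lemma SG_false n (Gamma : 'I_n -> list (L0 n)) S i b :
  SG Gamma S -> b \notin Gamma i -> st_B S i b = false.
Proof. by move=> H bn; apply/negP => /H; apply/negP. Qed.

Lemma inGammaE n (Gamma : 'I_n -> list (L0 n)) i a : inGamma Gamma i a = (a \in Gamma i).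
Proof.
rewrite /inGamma; case: List.in_dec => [/InE -> //|H].
by apply/esym/negP => /InE.
Qed.

Definition val n (S : state n) (w : qvar n) : bool :=
  match w.1 with Tri i a => st_B S i a | Atom p => st_V S p | _ => false end.

Definition setlev n (Gamma : 'I_n -> list (L0 n)) atms nu d (S : state n) : qvar n -> bool :=
  fun w => if w \in Xs Gamma atms d then val S w else nu w.

Definition stOf n (Gamma : 'I_n -> list (L0 n)) (atms : seq (atom n)) (nu : qvar n -> bool) d (S0 : state n) :=
  State (fun i a => (a \in Gamma i) && nu (Tri i a, d))
        (fun p => if p \in atms then nu (Atom p, d) else st_V S0 p).

Definition agree n (Gamma : 'I_n -> list (L0 n)) (atms : seq (atom n)) (nu : qvar n -> bool) s (S : state n) :=
  (forall i a, a \in Gamma i -> nu (Tri i a, s) = st_B S i a) /\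
  (forall p, p \in atms -> nu (Atom p, s) = st_V S p).

Definition clean n (Gamma : 'I_n -> list (L0 n)) (nu : qvar n -> bool) :=
  forall i a k, a \notin Gamma i -> nu (Tri i a, k) = false.

Lemma agree_out n (Gamma : 'I_n -> list (L0 n)) atms nu nu' d s S :
  outside (Xs Gamma atms d) nu nu' -> s != d -> agree Gamma atms nu s S -> agree Gamma atms nu' s S.
Proof.
move=> Ho sd [HB HV]; split=> [i a aG|p pa]; rewrite Ho ?HB ?HV //;
  apply/negP => /Xs_snd /= E; by rewrite E eqxx in sd.
Qed.

Lemma clean_out n (Gamma : 'I_n -> list (L0 n)) atms nu nu' d :
  outside (Xs Gamma atms d) nu nu' -> clean Gamma nu -> clean Gamma nu'.
Proof.
move=> Ho C i a k an; rewrite Ho ?C //; apply/negP => /Xs_tri H; by rewrite H in an.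
Qed.

Lemma setlev_out n (Gamma : 'I_n -> list (L0 n)) atms nu d S :
  outside (Xs Gamma atms d) nu (setlev Gamma atms nu d S).
Proof. by move=> w wn; rewrite /setlev (negbTE wn). Qed.

Lemma setlev_agree n (Gamma : 'I_n -> list (L0 n)) atms nu d S :
  agree Gamma atms (setlev Gamma atms nu d S) d S.
Proof.
split=> [i a aG|p pa]; rewrite /setlev.
  by rewrite Xs_in_tri.
by rewrite Xs_in_atom.
Qed.

Lemma setlev_clean n (Gamma : 'I_n -> list (L0 n)) atms nu d S :
  SG Gamma S -> clean Gamma nu -> clean Gamma (setlev Gamma atms nu d S).
Proof.
move=> HS C i a k an; rewrite /setlev; case: ifP => _; last exact: C.
by rewrite /val /= (SG_false HS an).
Qed.

Lemma stOf_SG n (Gamma : 'I_n -> list (L0 n)) atms nu d S0 : SG Gamma (stOf Gamma atms nu d S0).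
Proof. by move=> i a /= /andP[]. Qed.

Lemma stOf_agree n (Gamma : 'I_n -> list (L0 n)) atms nu d S0 :
  agree Gamma atms nu d (stOf Gamma atms nu d S0).
Proof. by split=> [i a aG|p pa] /=; rewrite ?aG ?pa. Qed.

Lemma stOf_V n (Gamma : 'I_n -> list (L0 n)) atms nu d S0 p :
  p \notin atms -> st_V (stOf Gamma atms nu d S0) p = st_V S0 p.
Proof. by move=> /negbTE /= ->. Qed.

Lemma lev_forall n (Gamma : 'I_n -> list (L0 n)) atms nu d S0 (P : state n -> Prop) F :
  (forall nu' S', outside (Xs Gamma atms d) nu nu' -> SG Gamma S' ->
     agree Gamma atms nu' d S' -> clean Gamma nu' ->
     (forall p, p \notin atms -> st_V S' p = st_V S0 p) -> P S' -> qeval nu' F) ->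
  (forall nu' S', outside (Xs Gamma atms d) nu nu' -> SG Gamma S' ->
     agree Gamma atms nu' d S' -> clean Gamma nu' -> qeval nu' F -> P S') ->
  clean Gamma nu ->
  ((forall S', in_SG Gamma S' -> P S') <-> qeval nu (QForallL (Xs Gamma atms d) F)).
Proof.
move=> H1 H2 C; split.
  move=> H; apply/qeval_forallL => nu' Ho.
  apply: (H1 nu' (stOf Gamma atms nu' d S0)) => //.
  - exact: stOf_SG.
  - exact: stOf_agree.
  - exact: clean_out Ho C.
  - exact: stOf_V.
  - by apply: H; apply/SG_in; exact: stOf_SG.
move=> /qeval_forallL H S' /SG_in HS.
apply: (H2 (setlev Gamma atms nu d S')) => //.
- exact: setlev_out.
- exact: setlev_agree.
- exact: setlev_clean.
- apply: H; exact: setlev_out.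
Qed.

Lemma lev_exists n (Gamma : 'I_n -> list (L0 n)) atms nu d S0 (P : state n -> Prop) F :
  (forall nu' S', outside (Xs Gamma atms d) nu nu' -> SG Gamma S' ->
     agree Gamma atms nu' d S' -> clean Gamma nu' -> P S' -> qeval nu' F) ->
  (forall nu' S', outside (Xs Gamma atms d) nu nu' -> SG Gamma S' ->
     agree Gamma atms nu' d S' -> clean Gamma nu' ->
     (forall p, p \notin atms -> st_V S' p = st_V S0 p) -> qeval nu' F -> P S') ->
  clean Gamma nu ->
  ((exists S', in_SG Gamma S' /\ P S') <-> qeval nu (QExistsL (Xs Gamma atms d) F)).
Proof.
move=> H1 H2 C; split.
  move=> [S' [/SG_in HS HP]]; apply/qeval_existsL; exists (setlev Gamma atms nu d S'); split.
    exact: setlev_out.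
  apply: (H1 _ S') => //.
  - exact: setlev_out.
  - exact: setlev_agree.
  - exact: setlev_clean.
move=> /qeval_existsL [nu' [Ho HF]]; exists (stOf Gamma atms nu' d S0); split.
  apply/SG_in; exact: stOf_SG.
apply: (H2 nu') => //.
- exact: stOf_SG.
- exact: stOf_agree.
- exact: clean_out Ho C.
- exact: stOf_V.
Qed.

Lemma tr0_ok n (Gamma : 'I_n -> list (L0 n)) atms nu s S a :
  SG Gamma S -> agree Gamma atms nu s S -> {subset atoms0 a <= atms} ->
  (sat0 S a <-> qeval nu (tr0 Gamma s a)).
Proof.
move=> HS [HB HV]; elim: a => [p|b IH|b IHb c IHc|i b _] /= Hsub.
- by rewrite HV // Hsub // mem_head.
- split=> [H|/negP H Hb]; first by apply/negP => /IH; auto.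
  by apply: H; apply/IH.
- have Hb : {subset atoms0 b <= atms} by move=> x xb; apply: Hsub; rewrite mem_cat xb.
  have Hc : {subset atoms0 c <= atms} by move=> x xc; apply: Hsub; rewrite mem_cat xc orbT.
  split=> [[/(IHb Hb) -> /(IHc Hc) ->] //|/andP[/(IHb Hb) ? /(IHc Hc) ?]]; by split.
- rewrite inGammaE; case: (boolP (b \in Gamma i)) => bG; first by rewrite /qv /= HB.
  by rewrite (SG_false HS bG).
Qed.

Lemma Ef_ok n (Gamma : 'I_n -> list (L0 n)) atms nu s d S S' i :
  (forall j a, a \in Gamma j -> {subset atoms0 a <= atms}) ->
  SG Gamma S -> SG Gamma S' -> agree Gamma atms nu s S -> agree Gamma atms nu d S' ->
  (relE i S S' <-> qeval nu (Ef Gamma i s d)).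
Proof.
move=> HG HS HS' [HB HV] Ag'; rewrite /Ef qAndL_E all_map; split.
  move=> H; apply/allP => a aG /=; apply/implyP; rewrite HB // => /H.
  by move/(tr0_ok HS' Ag' (HG _ _ aG)).
move=> /allP H a Ba; have aG := HS _ _ Ba; have := H a aG; rewrite /= HB // Ba /=.
by move/(tr0_ok HS' Ag' (HG _ _ aG)).
Qed.

Lemma Af_gen n (Gamma : 'I_n -> list (L0 n)) atms nu s d S S' i q :
  (forall j a, a \in Gamma j -> {subset atoms0 a <= atms}) ->
  SG Gamma S -> SG Gamma S' -> agree Gamma atms nu s S -> agree Gamma atms nu d S' ->
  ((exists a, st_B S i (Impl a (Atom q)) /\ sat0 S' a) <->
   qeval nu (qOrL [seq QAnd (qv (Tri i (Impl al (Atom q))) s) (tr0 Gamma d al)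
                  | al <- pmap (ante_of q) (Gamma i)])).
Proof.
move=> HG HS HS' [HB HV] Ag'; rewrite qOrL_E has_map.
have sub : forall a, Impl a (Atom q) \in Gamma i -> {subset atoms0 a <= atms}.
  move=> a aG x xa; apply: (HG _ _ aG); by rewrite /= mem_cat xa.
split.
  move=> [a [Ba Sa]]; have aG := HS _ _ Ba; apply/hasP; exists a.
    by rewrite mem_pmap_ante.
  by rewrite /= /qv /= HB // Ba /=; apply/(tr0_ok HS' Ag' (sub _ aG)).
move=> /hasP [a]; rewrite mem_pmap_ante => aG /= /andP[Ha Ht]; exists a; split.
  by rewrite -HB.
by apply/(tr0_ok HS' Ag' (sub _ aG)).
Qed.

Lemma eq_prop_ok n (Gamma : 'I_n -> list (L0 n)) atms nu s s' S S' :
  agree Gamma atms nu s S -> agree Gamma atms nu s' S' ->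
  (qeval nu (eq_prop atms s s') <-> (forall p, p \in atms -> st_V S' p = st_V S p)).
Proof.
move=> [_ HV] [_ HV']; rewrite /eq_prop qAndL_E all_map; split.
  by move=> /allP H p pa; have := H p pa; rewrite /= HV // HV' // => /eqP.
by move=> H; apply/allP => p pa /=; rewrite HV // HV' // H.
Qed.

Lemma eq_ag_ok n (Gamma : 'I_n -> list (L0 n)) atms nu s s' S S' j :
  agree Gamma atms nu s S -> agree Gamma atms nu s' S' ->
  (qeval nu (eq_ag Gamma j s s') <-> (forall b, b \in Gamma j -> st_B S' j b = st_B S j b)).
Proof.
move=> [HB _] [HB' _]; rewrite /eq_ag qAndL_E all_map; split.
  by move=> /allP H b bG; have := H b bG; rewrite /= HB // HB' // => /eqP.
by move=> H; apply/allP => b bG /=; rewrite HB // HB' // H.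
Qed.

Lemma eq_others_ok n (Gamma : 'I_n -> list (L0 n)) atms nu s s' S S' i a :
  agree Gamma atms nu s S -> agree Gamma atms nu s' S' ->
  (qeval nu (eq_others Gamma i a s s') <->
   (forall b, b \in Gamma i -> b != a -> st_B S' i b = st_B S i b)).
Proof.
move=> [HB _] [HB' _]; rewrite /eq_others qAndL_E all_map all_filter; split.
  move=> /allP H b bG ba; have := H b bG; rewrite /= L0_eqbE ba /= HB // HB' //.
  by move=> /eqP.
move=> H; apply/allP => b bG /=; rewrite L0_eqbE; apply/implyP => ba.
by rewrite HB // HB' // H.
Qed.

Lemma eq_all_but_ok n (Gamma : 'I_n -> list (L0 n)) atms nu s s' S S' i :
  agree Gamma atms nu s S -> agree Gamma atms nu s' S' ->
  (qeval nu (eq_all_but Gamma i s s') <->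
   (forall j b, j != i -> b \in Gamma j -> st_B S' j b = st_B S j b)).
Proof.
move=> Ag Ag'; rewrite /eq_all_but qAndL_E all_map all_filter; split.
  move=> /allP H j b ji bG; have := H j (mem_enum _ j); rewrite /= ji /=.
  by move/(eq_ag_ok j Ag Ag'); apply.
move=> H; apply/allP => j _ /=; apply/implyP => ji.
by apply/(eq_ag_ok j Ag Ag') => b; apply: H.
Qed.

Lemma eq_all_ok n (Gamma : 'I_n -> list (L0 n)) atms nu s s' S S' :
  agree Gamma atms nu s S -> agree Gamma atms nu s' S' ->
  (qeval nu (Defs.eq_all Gamma s s') <->
   (forall j b, b \in Gamma j -> st_B S' j b = st_B S j b)).
Proof.
move=> Ag Ag'; rewrite /Defs.eq_all qAndL_E all_map; split.
  move=> /allP H j b bG; have := H j (mem_enum _ j) => /=.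
  by move/(eq_ag_ok j Ag Ag'); apply.
move=> H; apply/allP => j _ /=.
by apply/(eq_ag_ok j Ag Ag') => b; apply: H.
Qed.

Lemma desc_ok n (Gamma : 'I_n -> list (L0 n)) atms nu s S :
  qeval nu (desc Gamma atms S s) <-> agree Gamma atms nu s S.
Proof.
rewrite /desc; cbn [qeval]; rewrite !qAndL_E !all_map !all_filter; split.
  move=> /andP[/allP HB /andP[/allP HP /allP HN]]; split.
    move=> i a aG; have := HB i; rewrite -enumT mem_enum => /(_ isT) /= /andP[].
    rewrite !qAndL_E !all_map !all_filter => /allP Hp /allP Hn.
    move: (Hp a aG) (Hn a aG) => /=.
    by case: (st_B S i a) => /=; [move=> -> | move=> _ /negbTE ->].
  move=> p pa; move: (HP p pa) (HN p pa) => /=.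
  by case: (st_V S p) => /=; [move=> -> | move=> _ /negbTE ->].
move=> [HB HV]; apply/andP; split.
  apply/allP => i _ /=; rewrite !qAndL_E !all_map !all_filter.
  by apply/andP; split; apply/allP => a aG /=; rewrite /qv /= HB // implybb.
by apply/andP; split; apply/allP => p pa /=; rewrite /qv /= HV // implybb.
Qed.

Scheme form_ind2 := Induction for form Sort Prop
  with prog_ind2 := Induction for prog Sort Prop.
Combined Scheme form_prog_ind from form_ind2, prog_ind2.

Lemma sub_cat (T : eqType) (s1 s2 A : seq T) :
  {subset s1 ++ s2 <= A} -> {subset s1 <= A} /\ {subset s2 <= A}.
Proof. by move=> H; split=> x xs; apply: H; rewrite mem_cat xs ?orbT. Qed.

Lemma trans_V n (U : state n -> Prop) :
  forall p S S', Defs.trans U p S S' -> forall q, st_V S' q = st_V S q.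
Proof.
have := @form_prog_ind n (fun _ => True)
  (fun p => forall S S', Defs.trans U p S S' -> forall q, st_V S' q = st_V S q).
case => //=.
- by move=> i a S S' [].
- by move=> i a S S' [].
- move=> p1 IH1 p2 IH2 S S' [S'' [_ [t1 t2]]] q; by rewrite (IH2 _ _ t2) (IH1 _ _ t1).
- by move=> p1 IH1 p2 IH2 S S' [/IH1|/IH2].
- by move=> g _ S S' [[HV _] _].
Qed.

Definition Pf n (Gamma : 'I_n -> list (L0 n)) atms (f : form n) :=
  forall d s nu S, {subset atoms_form f <= atms} -> s < d -> SG Gamma S -> clean Gamma nu ->
  agree Gamma atms nu s S ->
  (sat (in_SG Gamma) S f <-> qeval nu (Defs.tr Gamma atms d s f)).

Definition Pp n (Gamma : 'I_n -> list (L0 n)) atms (p : prog n) :=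
  forall d s s' nu S S', {subset atoms_prog p <= atms} -> s < d -> s' < d ->
  SG Gamma S -> SG Gamma S' -> clean Gamma nu ->
  agree Gamma atms nu s S -> agree Gamma atms nu s' S' ->
  (Defs.trans (in_SG Gamma) p S S' <->
   (forall q, q \notin atms -> st_V S' q = st_V S q) /\ qeval nu (trprog Gamma atms d s s' p)).

Lemma neq_lt s d : s < d -> s != d.
Proof. by move=> H; rewrite ltn_eqF. Qed.

Lemma main n (Gamma : 'I_n -> list (L0 n)) atms :
  (forall j a, a \in Gamma j -> {subset atoms0 a <= atms}) ->
  (forall f, Pf Gamma atms f) /\ (forall p, Pp Gamma atms p).
Proof.
move=> HG.
apply: form_prog_ind.
-
  move=> a d s nu S Hsub Hsd HS C Ag /=; exact: (tr0_ok HS Ag Hsub).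
-
  move=> g IH d s nu S Hsub Hsd HS C Ag /=.
  have E := IH d s nu S Hsub Hsd HS C Ag.
  split=> [H|/negP H Hs]; first by apply/negP => /E.
  by apply: H; apply/E.
-
  move=> g IHg h IHh d s nu S /sub_cat [H1 H2] Hsd HS C Ag /=.
  have E1 := IHg d s nu S H1 Hsd HS C Ag; have E2 := IHh d s nu S H2 Hsd HS C Ag.
  split=> [[/E1 -> /E2 ->] //|/andP[/E1 ? /E2 ?]]; by split.
-
  move=> i g IH d s nu S Hsub Hsd HS C Ag.
  apply: (@lev_forall n Gamma atms nu d S (fun S' => relE i S S' -> sat (in_SG Gamma) S' g)
            (QImpl (Ef Gamma i s d) (Defs.tr Gamma atms d.+1 d g))) => //.
    move=> nu' S' Ho HS' Ag' C' _ HP /=; apply/implyP.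
    move=> /(Ef_ok i HG HS HS' (agree_out Ho (neq_lt Hsd) Ag) Ag') /HP.
    by move/(IH d.+1 d nu' S' Hsub (ltnSn d) HS' C' Ag').
  move=> nu' S' Ho HS' Ag' C' /= /implyP HQ HE.
  apply/(IH d.+1 d nu' S' Hsub (ltnSn d) HS' C' Ag'); apply: HQ.
  by apply/(Ef_ok i HG HS HS' (agree_out Ho (neq_lt Hsd) Ag) Ag').
-
  move=> i g IH d s nu S Hsub Hsd HS C Ag.
  apply: (@lev_forall n Gamma atms nu d S (fun S' => sat (in_SG Gamma) S' g -> relA i S S')
            (QImpl (Defs.tr Gamma atms d.+1 d g) (Af Gamma i s d))) => //.
    move=> nu' S' Ho HS' Ag' C' _ HP /=; apply/implyP.
    move=> /(IH d.+1 d nu' S' Hsub (ltnSn d) HS' C' Ag') /HP.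
    by move/(Af_gen i (ARew i) HG HS HS' (agree_out Ho (neq_lt Hsd) Ag) Ag').
  move=> nu' S' Ho HS' Ag' C' /= /implyP HQ Hs.
  apply/(Af_gen i (ARew i) HG HS HS' (agree_out Ho (neq_lt Hsd) Ag) Ag'); apply: HQ.
  by apply/(IH d.+1 d nu' S' Hsub (ltnSn d) HS' C' Ag').
-
  move=> i g IH d s nu S Hsub Hsd HS C Ag.
  apply: (@lev_forall n Gamma atms nu d S (fun S' => sat (in_SG Gamma) S' g -> relR i S S')
            (QImpl (Defs.tr Gamma atms d.+1 d g) (Rf Gamma i s d))) => //.
    move=> nu' S' Ho HS' Ag' C' _ HP /=; apply/implyP.
    move=> /(IH d.+1 d nu' S' Hsub (ltnSn d) HS' C' Ag') /HP.
    by move/(Af_gen i (APun i) HG HS HS' (agree_out Ho (neq_lt Hsd) Ag) Ag').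
  move=> nu' S' Ho HS' Ag' C' /= /implyP HQ Hs.
  apply/(Af_gen i (APun i) HG HS HS' (agree_out Ho (neq_lt Hsd) Ag) Ag'); apply: HQ.
  by apply/(IH d.+1 d nu' S' Hsub (ltnSn d) HS' C' Ag').
-
  move=> i g IH d s nu S Hsub Hsd HS C Ag.
  apply: (@lev_forall n Gamma atms nu d S
            (fun S' => sat (in_SG Gamma) S' g -> relE i S S' -> relA i S S')
            (QImpl (QAnd (Defs.tr Gamma atms d.+1 d g) (Ef Gamma i s d)) (Af Gamma i s d))) => //.
    move=> nu' S' Ho HS' Ag' C' _ HP /=; apply/implyP => /andP[Ht He].
    apply/(Af_gen i (ARew i) HG HS HS' (agree_out Ho (neq_lt Hsd) Ag) Ag'); apply: HP.
      by apply/(IH d.+1 d nu' S' Hsub (ltnSn d) HS' C' Ag').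
    by apply/(Ef_ok i HG HS HS' (agree_out Ho (neq_lt Hsd) Ag) Ag').
  move=> nu' S' Ho HS' Ag' C' /= /implyP HQ Hs HE.
  apply/(Af_gen i (ARew i) HG HS HS' (agree_out Ho (neq_lt Hsd) Ag) Ag'); apply: HQ.
  apply/andP; split; first by apply/(IH d.+1 d nu' S' Hsub (ltnSn d) HS' C' Ag').
  by apply/(Ef_ok i HG HS HS' (agree_out Ho (neq_lt Hsd) Ag) Ag').
-
  move=> i g IH d s nu S Hsub Hsd HS C Ag.
  apply: (@lev_forall n Gamma atms nu d S
            (fun S' => sat (in_SG Gamma) S' g -> relE i S S' -> relR i S S')
            (QImpl (QAnd (Defs.tr Gamma atms d.+1 d g) (Ef Gamma i s d)) (Rf Gamma i s d))) => //.
    move=> nu' S' Ho HS' Ag' C' _ HP /=; apply/implyP => /andP[Ht He].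
    apply/(Af_gen i (APun i) HG HS HS' (agree_out Ho (neq_lt Hsd) Ag) Ag'); apply: HP.
      by apply/(IH d.+1 d nu' S' Hsub (ltnSn d) HS' C' Ag').
    by apply/(Ef_ok i HG HS HS' (agree_out Ho (neq_lt Hsd) Ag) Ag').
  move=> nu' S' Ho HS' Ag' C' /= /implyP HQ Hs HE.
  apply/(Af_gen i (APun i) HG HS HS' (agree_out Ho (neq_lt Hsd) Ag) Ag'); apply: HQ.
  apply/andP; split; first by apply/(IH d.+1 d nu' S' Hsub (ltnSn d) HS' C' Ag').
  by apply/(Ef_ok i HG HS HS' (agree_out Ho (neq_lt Hsd) Ag) Ag').
-
  move=> p IHp g IHg d s nu S /sub_cat [Hp Hg] Hsd HS C Ag.
  apply: (@lev_forall n Gamma atms nu d S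
            (fun S' => Defs.trans (in_SG Gamma) p S S' -> sat (in_SG Gamma) S' g)
            (QImpl (trprog Gamma atms d.+1 s d p) (Defs.tr Gamma atms d.+1 d g))) => //.
    move=> nu' S' Ho HS' Ag' C' Vr HP /=; apply/implyP => Ht.
    apply/(IHg d.+1 d nu' S' Hg (ltnSn d) HS' C' Ag'); apply: HP.
    apply/(IHp d.+1 s d nu' S S' Hp (ltnW Hsd) (ltnSn d) HS HS' C'
             (agree_out Ho (neq_lt Hsd) Ag) Ag').
    by split.
  move=> nu' S' Ho HS' Ag' C' /= /implyP HQ Ht.
  apply/(IHg d.+1 d nu' S' Hg (ltnSn d) HS' C' Ag'); apply: HQ.
  by case/(IHp d.+1 s d nu' S S' Hp (ltnW Hsd) (ltnSn d) HS HS' C'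
             (agree_out Ho (neq_lt Hsd) Ag) Ag'): Ht.
-
  move=> i a d s s' nu S S' Hsub Hsd Hs'd HS HS' C Ag Ag'.
  have EP := eq_prop_ok Ag Ag'; have EA := eq_all_but_ok i Ag Ag'.
  have EO := eq_others_ok i a Ag Ag'.
  case: (Ag') => HB' _.
  rewrite /=. split.
    move=> [HV [Hi Hj]]; split; first by move=> q _; exact: HV.
    apply/andP; split; first by apply/EA => j b ji _; apply: Hj; apply/eqP.
    apply/andP; split; last by apply/EP => q _; exact: HV.
    apply/andP; split.
      have Ba : st_B S' i a by rewrite Hi L0_eqbE eqxx orbT.
      by rewrite /qv /= HB' ?(HS' _ _ Ba).
    by apply/EO => b _ ba; rewrite Hi L0_eqbE (negbTE ba) orbF.
  move=> [HVo /andP[/EA Hab /andP[/andP[Hx /EO Hoth] /EP Hp]]].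
  split.
    move=> q; case: (boolP (q \in atms)) => qa; [exact: Hp | exact: HVo].
  split.
    move=> b; rewrite L0_eqbE; case: (eqVneq b a) => [->|ba]; rewrite ?orbT ?orbF.
      case: (boolP (a \in Gamma i)) => aG; first by rewrite -HB'.
      by rewrite /qv /= C in Hx.
    case: (boolP (b \in Gamma i)) => bG; first exact: Hoth.
    by rewrite (SG_false HS' bG) (SG_false HS bG).
  move=> j b ji; case: (boolP (b \in Gamma j)) => bG; first by apply: Hab => //; apply/eqP.
  by rewrite (SG_false HS' bG) (SG_false HS bG).
-
  move=> i a d s s' nu S S' Hsub Hsd Hs'd HS HS' C Ag Ag'.
  have EP := eq_prop_ok Ag Ag'; have EA := eq_all_but_ok i Ag Ag'.
  have EO := eq_others_ok i a Ag Ag'.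
  case: (Ag') => HB' _.
  rewrite /=. split.
    move=> [HV [Hi Hj]]; split; first by move=> q _; exact: HV.
    apply/andP; split; first by apply/EA => j b ji _; apply: Hj; apply/eqP.
    apply/andP; split; last by apply/EP => q _; exact: HV.
    apply/andP; split.
      case: (boolP (a \in Gamma i)) => aG.
        by rewrite /qv /= HB' // Hi L0_eqbE eqxx andbF.
      by rewrite /qv /= C.
    by apply/EO => b _ ba; rewrite Hi L0_eqbE ba andbT.
  move=> [HVo /andP[/EA Hab /andP[/andP[Hx /EO Hoth] /EP Hp]]].
  split.
    move=> q; case: (boolP (q \in atms)) => qa; [exact: Hp | exact: HVo].
  split.
    move=> b; rewrite L0_eqbE; case: (eqVneq b a) => [->|ba]; rewrite ?andbF ?andbT.
      case: (boolP (a \in Gamma i)) => aG; last by rewrite (SG_false HS' aG).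
      by rewrite -HB' //; apply/negbTE.
    case: (boolP (b \in Gamma i)) => bG; first exact: Hoth.
    by rewrite (SG_false HS' bG) (SG_false HS bG).
  move=> j b ji; case: (boolP (b \in Gamma j)) => bG; first by apply: Hab => //; apply/eqP.
  by rewrite (SG_false HS' bG) (SG_false HS bG).
-
  move=> p1 IH1 p2 IH2 d s s' nu S S' /sub_cat [H1 H2] Hsd Hs'd HS HS' C Ag Ag'.
  suff L : (forall q, q \notin atms -> st_V S' q = st_V S q) ->
    ((exists S'', in_SG Gamma S'' /\
        (Defs.trans (in_SG Gamma) p1 S S'' /\ Defs.trans (in_SG Gamma) p2 S'' S')) <->
     qeval nu (trprog Gamma atms d s s' (PSeq p1 p2))).
    split=> [H|[HVo HQ]]; last by apply/(L HVo).
    have HVo : forall q, q \notin atms -> st_V S' q = st_V S q.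
      by move=> q _; exact: (trans_V H).
    by split => //; apply/(L HVo).
  move=> HVo.
  apply: (@lev_exists n Gamma atms nu d S
            (fun S'' => Defs.trans (in_SG Gamma) p1 S S'' /\ Defs.trans (in_SG Gamma) p2 S'' S')
            (QAnd (trprog Gamma atms d.+1 s d p1) (trprog Gamma atms d.+1 d s' p2))) => //.
    move=> nu' S'' Ho HS'' Ag'' C' [t1 t2] /=; apply/andP; split.
      by case/(IH1 d.+1 s d nu' S S'' H1 (ltnW Hsd) (ltnSn d) HS HS'' C'
             (agree_out Ho (neq_lt Hsd) Ag) Ag''): t1.
    by case/(IH2 d.+1 d s' nu' S'' S' H2 (ltnSn d) (ltnW Hs'd) HS'' HS' C'
             Ag'' (agree_out Ho (neq_lt Hs'd) Ag')): t2.
  move=> nu' S'' Ho HS'' Ag'' C' Vr /= /andP[q1 q2]; split.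
    apply/(IH1 d.+1 s d nu' S S'' H1 (ltnW Hsd) (ltnSn d) HS HS'' C'
             (agree_out Ho (neq_lt Hsd) Ag) Ag''); by split.
  apply/(IH2 d.+1 d s' nu' S'' S' H2 (ltnSn d) (ltnW Hs'd) HS'' HS' C'
             Ag'' (agree_out Ho (neq_lt Hs'd) Ag')); split => // q qn.
  by rewrite HVo // Vr.
-
  move=> p1 IH1 p2 IH2 d s s' nu S S' /sub_cat [H1 H2] Hsd Hs'd HS HS' C Ag Ag'.
  have E1 := IH1 d s s' nu S S' H1 Hsd Hs'd HS HS' C Ag Ag'.
  have E2 := IH2 d s s' nu S S' H2 Hsd Hs'd HS HS' C Ag Ag'.
  rewrite /=; split.
    by case=> [/E1 [Vo Q]|/E2 [Vo Q]]; split => //; rewrite Q ?orbT.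
  by move=> [Vo /orP[Q|Q]]; [left; apply/E1 | right; apply/E2].
-
  move=> g IHg d s s' nu S S' Hsub Hsd Hs'd HS HS' C Ag Ag'.
  have EP := eq_prop_ok Ag Ag'; have EALL := eq_all_ok Ag Ag'.
  have Eg := IHg d s nu S Hsub Hsd HS C Ag.
  rewrite /=; split.
    move=> [[HV HB] Hs]; split; first by move=> q _; exact: HV.
    apply/andP; split; first by apply/EALL => j b _; exact: HB.
    apply/andP; split; first by apply/EP => q _; exact: HV.
    by apply/Eg.
  move=> [Vo /andP[/EALL HB /andP[/EP Hp /Eg Hs]]]; split => //; split.
    move=> q; case: (boolP (q \in atms)) => qa; [exact: Hp | exact: Vo].
  move=> j b; case: (boolP (b \in Gamma j)) => bG; first exact: HB.
  by rewrite (SG_false HS' bG) (SG_false HS bG).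
Qed.

Theorem proposition3 (n : nat) (Gamma : 'I_n -> list (L0 n)) (phi0 : form n)
    (S0 : state n) :
  in_SG Gamma S0 ->
  (sat (in_SG Gamma) S0 phi0 <-> qbf_true (translation Gamma phi0 S0)).
Proof.
move=> /SG_in HS.
set atms := atoms_of Gamma phi0.
have HG : forall j a, a \in Gamma j -> {subset atoms0 a <= atms}.
  move=> j a aG x xa; rewrite /atms /atoms_of mem_cat; apply/orP; left.
  apply/flattenP; exists (flatten [seq atoms0 a | a <- Gamma j]).
    by apply/mapP; exists j; rewrite ?mem_enum.
  by apply/flattenP; exists (atoms0 a) => //; apply/mapP; exists a.
have Hsub : {subset atoms_form phi0 <= atms}.
  by move=> x xa; rewrite /atms /atoms_of mem_cat xa orbT.
have [Mf _] := main HG.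
have C0 : clean Gamma (fun _ : qvar n => false) by [].
have -> : translation Gamma phi0 S0 =
  QExistsL (Xs Gamma atms 0) (QAnd (desc Gamma atms S0 0) (Defs.tr Gamma atms 1 0 phi0)) by [].
rewrite /qbf_true; split.
  move=> H; apply/qeval_existsL; exists (setlev Gamma atms (fun _ => false) 0 S0); split.
    exact: setlev_out.
  have Ag := setlev_agree Gamma atms (fun _ => false) 0 S0.
  have C := setlev_clean atms 0 HS C0.
  apply/andP; split; first by apply/desc_ok.
  by apply/(Mf phi0 1 0 _ S0 Hsub (ltn0Sn 0) HS C Ag).
move=> /qeval_existsL [nu' [Ho /andP[/desc_ok Ag Ht]]].
have C := clean_out Ho C0.
by apply/(Mf phi0 1 0 nu' S0 Hsub (ltn0Sn 0) HS C Ag).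
Qed.
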